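(* Let $\lambda$ be a nonzero real number and $\delta\in\mathbb{C}$ with $\mathrm{Re}(\delta)>0$. (i) For every $p\in\mathbb{N}$ and every real $x$ with $0<x<1/|\lambda|$, \[ \Big(\frac{d}{dx}x\Big)^{p}\big[x^{\delta-1}e_{\lambda}(x,\ \delta|p)\big]=x^{\delta-1}e_{\lambda}(x). \] (ii) For every complex $x$ with $|x|<1/|\lambda|$ and every $z\in\mathbb{C}$ with $|z|<|\delta|$, \[ \sum_{k=0}^{\infty}e_{\lambda}(x,\ \delta|k)z^{k}=e_{\lambda}(x)+z\,e_{\lambda}(x,\ \delta-z|1). \]
   Context: For nonzero real $\lambda$: $(1)_{0,\lambda}=1$, $(1)_{n,\lambda}=1(1-\lambda)\cdots(1-(n-1)\lambda)$ for $n\ge1$. $e_\lambda(x)=\sum_{n\ge0}(1)_{n,\lambda}x^n/n!$ $(=(1+\lambda x)^{1/\lambda}$ for real $x$ with $|\lambda x|<1)$. For $k\in\mathbb{N}\cup\{0\}$ and $\delta$ with $n+\delta\neq0$ for all $n\ge0$, $e_{\lambda}(x,\ \delta|k)=\sum_{n=0}^{\infty}\frac{(1)_{n,\lambda}}{n!\,(n+\delta)^{k}}x^{n}$ (in (ii), $e_\lambda(x,\delta-z|1)=\sum_{n\ge0}\frac{(1)_{n,\lambda}x^n}{n!(n+\delta-z)}$). The operator $\frac{d}{dx}x$ sends $f(x)$ to $\frac{d}{dx}\big(xf(x)\big)$, and $(\frac{d}{dx}x)^p$ is its $p$-fold iterate. For $x>0$, $x^{\delta-1}=\exp((\delta-1)\log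 x)$. *)

(* Defs.v *)
From Stdlib Require Import Reals Factorial.
From Coquelicot Require Import Coquelicot.
Open Scope R_scope.

Fixpoint falling_lam (lam : R) (n : nat) : R :=
  match n with
  | O => 1
  | S m => falling_lam lam m * (1 - INR m * lam)
  end.

Fixpoint Cpow (z : C) (n : nat) : C :=
  match n with
  | O => RtoC 1
  | S m => Cmult z (Cpow z m)
  end.

Definition CSeries (a : nat -> C) : C :=
  (Series (fun n => Re (a n)), Series (fun n => Im (a n))).

Definition e_lam (lam : R) (x : C) : C :=
  CSeries (fun n => Cmult (RtoC (falling_lam lam n / INR (Factorial.fact n))) (Cpow x n)).

Definition e_lam_gen (lam : R) (x : C) (delta : C) (k : nat) : C :=
  CSeries (fun n =>
    Cmult (Cdiv (RtoC (falling_lam lam n / INR (Factorial.fact n)))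
                (Cpow (Cplus (RtoC (INR n)) delta) k))
          (Cpow x n)).

Definition Cexp (z : C) : C :=
  Cmult (RtoC (exp (Re z))) (cos (Im z), sin (Im z)).

Definition Rcpow (x : R) (w : C) : C := Cexp (Cmult w (RtoC (ln x))).

Definition Dx_x (f : R -> C) : R -> C :=
  fun x => (Derive (fun t => Re (Cmult (RtoC t) (f t))) x,
            Derive (fun t => Im (Cmult (RtoC t) (f t))) x).

Fixpoint Dx_x_iter (p : nat) (f : R -> C) : R -> C :=
  match p with
  | O => f
  | S q => Dx_x (Dx_x_iter q f)
  end.

(* Main.v *)
Require Import Defs.
From Stdlib Require Import Reals Lra Lia FunctionalExtensionality.
From Coquelicot Require Import Coquelicot.
Open Scope R_scope.

Definition acoef (lam : R) (n : nat) : R := falling_lam lam n / INR (Factorial.fact n).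

Fixpoint bb (L : R) (n : nat) : R :=
  match n with O => 1 | S m => bb L m * (1 + INR m * L) / INR (S m) end.

Lemma INR_S_pos (m : nat) : 0 < INR (S m).
Proof. apply lt_0_INR; lia. Qed.

Lemma acoef_S lam m : acoef lam (S m) = acoef lam m * (1 - INR m * lam) / INR (S m).
Proof.
  unfold acoef. simpl falling_lam. rewrite fact_simpl, mult_INR.
  pose proof (INR_fact_neq_0 m). pose proof (INR_S_pos m). field. lra.
Qed.

Lemma bb_pos L n : 0 <= L -> 0 < bb L n.
Proof.
  intros HL; induction n as [|m IH]; [simpl; lra|]. change (bb L (S m)) with (bb L m * (1 + INR m * L) / INR (S m)).
  pose proof (INR_S_pos m). pose proof (pos_INR m). intros.
  apply Rdiv_lt_0_compat; [|lra]. apply Rmult_lt_0_compat; [lra|]. nra.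
Qed.

Lemma acoef_le lam n : Rabs (acoef lam n) <= bb (Rabs lam) n.
Proof.
  induction n as [|m IH].
  - unfold acoef; simpl. rewrite Rdiv_1_r, Rabs_R1; lra.
  - rewrite acoef_S. change (bb (Rabs lam) (S m)) with (bb (Rabs lam) m * (1 + INR m * Rabs lam) / INR (S m)).
    pose proof (INR_S_pos m). pose proof (pos_INR m). intros.
    rewrite Rabs_div; [|lra]. rewrite Rabs_mult, (Rabs_right (INR (S m))); [|lra].
    apply Rmult_le_compat_r. { left; apply Rinv_0_lt_compat; lra. }
    apply Rmult_le_compat; try apply Rabs_pos; auto.
    eapply Rle_trans; [apply Rabs_triang|]. rewrite Rabs_R1, Rabs_Ropp, Rabs_mult, Rabs_right; lra.
Qed.

Lemma bb_radius L : 0 < L -> CV_radius (bb L) = / L.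
Proof.
  intros HL. apply CV_radius_finite_DAlembert; auto.
  - intros n; pose proof (bb_pos L n (Rlt_le _ _ HL)); lra.
  - apply is_lim_seq_ext with (fun n => L + (1 - L) * / INR (S n)).
    + intros n. change (bb L (S n)) with (bb L n * (1 + INR n * L) / INR (S n)). pose proof (bb_pos L n (Rlt_le _ _ HL)). pose proof (INR_S_pos n). pose proof (pos_INR n). intros.
      replace (bb L n * (1 + INR n * L) / INR (S n) / bb L n) with ((1 + INR n * L) / INR (S n)) by (field; lra).
      rewrite Rabs_right.
      * rewrite S_INR. field. lra.
      * apply Rle_ge. left; apply Rdiv_lt_0_compat; nra.
    + replace (Finite L) with (Finite (L + (1 - L) * 0)) by (f_equal; ring).
      apply is_lim_seq_plus'. apply is_lim_seq_const.
      replace (Finite ((1 - L) * 0)) with (Rbar_mult (1 - L) 0) by (simpl; f_equal).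
      apply is_lim_seq_scal_l.
      replace (Finite 0) with (Rbar_inv p_infty) by reflexivity.
      apply is_lim_seq_inv; [|discriminate].
      apply (is_lim_seq_incr_1 INR). apply is_lim_seq_INR.
Qed.

Lemma CV_radius_le_comp (a b : nat -> R) (M : R) :
  (forall n, Rabs (a n) <= M * Rabs (b n)) -> Rbar_le (CV_radius b) (CV_radius a).
Proof.
  intros H. unfold CV_radius.
  destruct (Lub_Rbar_correct (CV_disk b)) as [_ Hl]. apply Hl.
  intros r Hr. apply (proj1 (Lub_Rbar_correct (CV_disk a))).
  unfold CV_disk in *.
  apply (@ex_series_le R_AbsRing R_CompleteNormedModule _ (fun n => M * Rabs (b n * r ^ n))).
  - intros n. change (norm (Rabs (a n * r ^ n))) with (Rabs (Rabs (a n * r ^ n))).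
    rewrite Rabs_Rabsolu, !Rabs_mult. rewrite <- Rmult_assoc.
    apply Rmult_le_compat_r; [apply Rabs_pos | apply H].
  - apply (ex_series_scal_l M) in Hr. exact Hr.
Qed.
Definition dd (delta : C) (n : nat) : C := Cplus (RtoC (INR n)) delta.
Definition cc lam delta k n : C := Cdiv (RtoC (acoef lam n)) (Defs.Cpow (dd delta n) k).
Definition ReC lam delta k n := Re (cc lam delta k n).
Definition ImC lam delta k n := Im (cc lam delta k n).
Definition EE lam delta k (t : R) : C := (PSeries (ReC lam delta k) t, PSeries (ImC lam delta k) t).

Lemma Cpow_Complex z n : Defs.Cpow z n = Complex.Cpow z n.
Proof. induction n; simpl; [reflexivity| rewrite IHn; reflexivity]. Qed.

Lemma Cpow_RtoC t n : Defs.Cpow (RtoC t) n = RtoC (t ^ n).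
Proof. induction n; simpl; [reflexivity|]. rewrite IHn, RtoC_mult. reflexivity. Qed.

Lemma e_lam_gen_EE lam delta k t : e_lam_gen lam (RtoC t) delta k = EE lam delta k t.
Proof.
  unfold e_lam_gen, EE, CSeries, PSeries. f_equal; apply Series_ext; intros n;
  rewrite Cpow_RtoC; first [rewrite re_scal_r | rewrite im_scal_r]; reflexivity.
Qed.

Lemma Cdiv_1 c : Cdiv c (RtoC 1) = c.
Proof. field; apply C1_nz. Qed.

Lemma e_lam_EE lam delta t : e_lam lam (RtoC t) = EE lam delta 0 t.
Proof.
  rewrite <- e_lam_gen_EE. unfold e_lam, e_lam_gen, CSeries.
  f_equal; apply Series_ext; intros n; cbn [Defs.Cpow]; rewrite Cdiv_1; reflexivity.
Qed.

Lemma dd_re delta n : Re (dd delta n) = INR n + Re delta.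
Proof. unfold dd. rewrite re_plus, re_RtoC. reflexivity. Qed.
Lemma dd_im delta n : Im (dd delta n) = Im delta.
Proof. unfold dd. rewrite im_plus, im_RtoC. ring. Qed.

Lemma dd_Cmod_ge_re delta n : 0 < Re delta -> Re delta <= Cmod (dd delta n).
Proof.
  intros H. eapply Rle_trans; [|apply re_le_Cmod]. rewrite dd_re.
  pose proof (pos_INR n). rewrite Rabs_right; lra.
Qed.

Lemma dd_Cmod_ge delta n : 0 < Re delta -> Cmod delta <= Cmod (dd delta n).
Proof.
  intros H. pose proof (Cmod2_alt delta). pose proof (Cmod2_alt (dd delta n)).
  rewrite dd_re, dd_im in H1. pose proof (pos_INR n).
  pose proof (Cmod_ge_0 delta). pose proof (Cmod_ge_0 (dd delta n)).
  assert (Cmod delta ^ 2 <= Cmod (dd delta n) ^ 2) by nra. nra.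
Qed.

Lemma dd_neq0 delta n : 0 < Re delta -> dd delta n <> RtoC 0.
Proof.
  intros H E. pose proof (dd_Cmod_ge_re delta n H). rewrite E, Cmod_0 in H0. lra.
Qed.

Lemma Cmod_cc_le lam delta k n : 0 < Re delta ->
  Cmod (cc lam delta k n) <= (/ Re delta) ^ k * bb (Rabs lam) n.
Proof.
  intros H. unfold cc. rewrite Cmod_div.
  2:{ rewrite Cpow_Complex. apply Cpow_nz. apply dd_neq0; auto. }
  rewrite Cmod_R, Cpow_Complex, Cmod_pow. unfold Rdiv. rewrite Rmult_comm.
  apply Rmult_le_compat.
  - rewrite <- pow_inv. apply pow_le. left; apply Rinv_0_lt_compat.
    pose proof (dd_Cmod_ge_re delta n H). lra.
  - apply Rabs_pos.
  - rewrite <- !pow_inv. apply pow_incr. split.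
    + left; apply Rinv_0_lt_compat. pose proof (dd_Cmod_ge_re delta n H). lra.
    + apply Rinv_le_contravar; auto. apply dd_Cmod_ge_re; auto.
  - apply acoef_le.
Qed.

Lemma radius_ReC lam delta k : 0 < Re delta -> lam <> 0 ->
  Rbar_le (/ Rabs lam) (CV_radius (ReC lam delta k)) /\
  Rbar_le (/ Rabs lam) (CV_radius (ImC lam delta k)).
Proof.
  intros H Hl. pose proof (Rabs_pos_lt _ Hl).
  rewrite <- (bb_radius (Rabs lam)); auto.
  assert (forall n, Rabs (Re (cc lam delta k n)) <= (/ Re delta) ^ k * Rabs (bb (Rabs lam) n)
                 /\ Rabs (Im (cc lam delta k n)) <= (/ Re delta) ^ k * Rabs (bb (Rabs lam) n)).
  { intros n. rewrite (Rabs_right (bb (Rabs lam) n)) by (left; apply bb_pos; lra).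
    pose proof (Cmod_cc_le lam delta k n H). pose proof (Rmax_Cmod (cc lam delta k n)).
    pose proof (Rmax_l (Rabs (fst (cc lam delta k n))) (Rabs (snd (cc lam delta k n)))).
    pose proof (Rmax_r (Rabs (fst (cc lam delta k n))) (Rabs (snd (cc lam delta k n)))).
    unfold Re, Im in *. split; lra. }
  split; apply CV_radius_le_comp with ((/ Re delta) ^ k); intros n; apply H1.
Qed.

Lemma cc_rec lam delta k n : 0 < Re delta ->
  cc lam delta k n = Cmult (dd delta n) (cc lam delta (S k) n).
Proof.
  intros H. unfold cc. cbn [Defs.Cpow]. pose proof (dd_neq0 delta n H).
  assert (Defs.Cpow (dd delta n) k <> RtoC 0) by (rewrite Cpow_Complex; apply Cpow_nz; auto).
  field. auto.
Qed.

Lemma ReC_rec lam delta k n : 0 < Re delta ->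
  ReC lam delta k n = (INR n + Re delta) * ReC lam delta (S k) n - Im delta * ImC lam delta (S k) n.
Proof. intros H. unfold ReC, ImC. rewrite cc_rec by auto. rewrite re_mult, dd_re, dd_im. ring. Qed.

Lemma ImC_rec lam delta k n : 0 < Re delta ->
  ImC lam delta k n = (INR n + Re delta) * ImC lam delta (S k) n + Im delta * ReC lam delta (S k) n.
Proof. intros H. unfold ReC, ImC. rewrite cc_rec by auto. rewrite im_mult, dd_re, dd_im. ring. Qed.

Ltac Rsimpl := unfold plus, opp, scal, minus; simpl;
  repeat match goal with |- context [mult ?x ?y] => change (mult x y) with (Rmult x y) end.

Lemma rad_lt lam delta k s : 0 < Re delta -> lam <> 0 -> Rabs s < 1 / Rabs lam ->
  Rbar_lt (Rabs s) (CV_radius (ReC lam delta k)) /\ Rbar_lt (Rabs s) (CV_radius (ImC lam delta k)).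
Proof.
  intros H Hl Hs. destruct (radius_ReC lam delta k H Hl) as [H1 H2].
  rewrite Rdiv_1_l in Hs.
  split; eapply Rbar_lt_le_trans; eauto; exact Hs.
Qed.

Lemma PSeries_is_series a s : Rbar_lt (Rabs s) (CV_radius a) ->
  is_series (fun n => a n * s ^ n) (PSeries a s).
Proof. intros H. apply is_pseries_R. apply PSeries_correct. apply CV_radius_inside; auto. Qed.

Lemma PSeries_deriv_series a s : Rbar_lt (Rabs s) (CV_radius a) ->
  is_series (fun n => INR n * a n * s ^ n) (s * PSeries (PS_derive a) s).
Proof.
  intros H.
  pose proof (PSeries_is_series (PS_derive a) s) as H1.
  rewrite CV_radius_derive in H1. specialize (H1 H).
  apply (is_series_scal_l s) in H1.
  apply is_series_decr_1.
  match goal with |- is_series _ ?L => replace L with (scal s (PSeries (PS_derive a) s)) end.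
  2:{ change (plus ?x (opp ?y)) with (x + - y). change (scal ?x ?y) with (x * y). simpl. ring. }
  eapply is_series_ext; [|exact H1]. intros n. unfold PS_derive. change (scal ?x ?y) with (x * y). simpl. ring.
Qed.

Lemma A_rec lam delta k s : 0 < Re delta -> lam <> 0 -> Rabs s < 1 / Rabs lam ->
  PSeries (ReC lam delta k) s =
    Re delta * PSeries (ReC lam delta (S k)) s - Im delta * PSeries (ImC lam delta (S k)) s
    + s * PSeries (PS_derive (ReC lam delta (S k))) s.
Proof.
  intros H Hl Hs. destruct (rad_lt lam delta (S k) s H Hl Hs) as [R1 R2].
  apply is_series_unique.
  pose proof (is_series_scal_l (Re delta) _ _ (PSeries_is_series _ _ R1)) as S1.
  pose proof (is_series_scal_l (Im delta) _ _ (PSeries_is_series _ _ R2)) as S2.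
  pose proof (PSeries_deriv_series _ _ R1) as S3.
  pose proof (is_series_plus _ _ _ _ (is_series_minus _ _ _ _ S1 S2) S3) as S4.
  eapply is_series_ext; [|exact S4]. intros n. simpl. rewrite (ReC_rec lam delta k n H).
  Rsimpl; ring.
Qed.

Lemma B_rec lam delta k s : 0 < Re delta -> lam <> 0 -> Rabs s < 1 / Rabs lam ->
  PSeries (ImC lam delta k) s =
    Re delta * PSeries (ImC lam delta (S k)) s + Im delta * PSeries (ReC lam delta (S k)) s
    + s * PSeries (PS_derive (ImC lam delta (S k))) s.
Proof.
  intros H Hl Hs. destruct (rad_lt lam delta (S k) s H Hl Hs) as [R1 R2].
  apply is_series_unique.
  pose proof (is_series_scal_l (Re delta) _ _ (PSeries_is_series _ _ R2)) as S1.
  pose proof (is_series_scal_l (Im delta) _ _ (PSeries_is_series _ _ R1)) as S2.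
  pose proof (PSeries_deriv_series _ _ R2) as S3.
  pose proof (is_series_plus _ _ _ _ (is_series_plus _ _ _ _ S1 S2) S3) as S4.
  eapply is_series_ext; [|exact S4]. intros n. simpl. rewrite (ImC_rec lam delta k n H).
  Rsimpl; ring.
Qed.

Lemma locally_interval (t b : R) : 0 < t < b -> locally t (fun u => 0 < u < b).
Proof. intros H. apply (open_and _ _ (open_gt 0) (open_lt b)). exact H. Qed.

Lemma Rcpow_form u delta : Rcpow u (Cminus delta (RtoC 1)) =
  (exp ((Re delta - 1) * ln u) * cos (Im delta * ln u), exp ((Re delta - 1) * ln u) * sin (Im delta * ln u)).
Proof.
  destruct delta as [a b]. unfold Rcpow, Cexp, Cminus, Cplus, Copp, Cmult, RtoC, Re, Im. simpl.
  match goal with |- context [exp ?e] => replace e with ((a - 1) * ln u) by ring end.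
  match goal with |- context [cos ?e] => replace e with (b * ln u) by ring end.
  f_equal; ring.
Qed.

Definition ff lam delta k (t : R) : C :=
  Cmult (Rcpow t (Cminus delta (RtoC 1))) (e_lam_gen lam (RtoC t) delta k).

Lemma Re_uf lam delta k u : Re (Cmult (RtoC u) (ff lam delta k u)) =
  u * exp ((Re delta - 1) * ln u) * (cos (Im delta * ln u) * PSeries (ReC lam delta k) u
     - sin (Im delta * ln u) * PSeries (ImC lam delta k) u).
Proof. unfold ff. rewrite Rcpow_form, e_lam_gen_EE. unfold EE, Cmult, RtoC, Re, Im. simpl. ring. Qed.

Lemma Im_uf lam delta k u : Im (Cmult (RtoC u) (ff lam delta k u)) =
  u * exp ((Re delta - 1) * ln u) * (cos (Im delta * ln u) * PSeries (ImC lam delta k) u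
     + sin (Im delta * ln u) * PSeries (ReC lam delta k) u).
Proof. unfold ff. rewrite Rcpow_form, e_lam_gen_EE. unfold EE, Cmult, RtoC, Re, Im. simpl. ring. Qed.

Lemma Re_f lam delta k u : Re (ff lam delta k u) =
  exp ((Re delta - 1) * ln u) * (cos (Im delta * ln u) * PSeries (ReC lam delta k) u
     - sin (Im delta * ln u) * PSeries (ImC lam delta k) u).
Proof. unfold ff. rewrite Rcpow_form, e_lam_gen_EE. unfold EE, Cmult, RtoC, Re, Im. simpl. ring. Qed.

Lemma Im_f lam delta k u : Im (ff lam delta k u) =
  exp ((Re delta - 1) * ln u) * (cos (Im delta * ln u) * PSeries (ImC lam delta k) u
     + sin (Im delta * ln u) * PSeries (ReC lam delta k) u).
Proof. unfold ff. rewrite Rcpow_form, e_lam_gen_EE. unfold EE, Cmult, RtoC, Re, Im. simpl. ring. Qed.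

Lemma deriv_step lam delta k s : 0 < Re delta -> lam <> 0 -> 0 < s < 1 / Rabs lam ->
  is_derive (fun u => Re (Cmult (RtoC u) (ff lam delta (S k) u))) s (Re (ff lam delta k s)) /\
  is_derive (fun u => Im (Cmult (RtoC u) (ff lam delta (S k) u))) s (Im (ff lam delta k s)).
Proof.
  intros H Hl Hs.
  assert (Hs' : Rabs s < 1 / Rabs lam) by (rewrite Rabs_right; lra).
  destruct (rad_lt lam delta (S k) s H Hl Hs') as [R1 R2].
  pose proof (Derive_PSeries _ _ R1) as D1. pose proof (Derive_PSeries _ _ R2) as D2.
  pose proof (ex_derive_PSeries _ _ R1) as E1. pose proof (ex_derive_PSeries _ _ R2) as E2.
  rewrite Re_f, Im_f, (A_rec lam delta k s), (B_rec lam delta k s); auto.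
  split.
  - eapply is_derive_ext. { intros t. symmetry. apply Re_uf. }
    auto_derive.
    + repeat split; auto; lra.
    + change (fun x => PSeries (ReC lam delta (S k)) x) with (PSeries (ReC lam delta (S k))).
      change (fun x => PSeries (ImC lam delta (S k)) x) with (PSeries (ImC lam delta (S k))).
      rewrite D1, D2. field. lra.
  - eapply is_derive_ext. { intros t. symmetry. apply Im_uf. }
    auto_derive.
    + repeat split; auto; lra.
    + change (fun x => PSeries (ReC lam delta (S k)) x) with (PSeries (ReC lam delta (S k))).
      change (fun x => PSeries (ImC lam delta (S k)) x) with (PSeries (ImC lam delta (S k))).
      rewrite D1, D2. field. lra.
Qed.

Lemma iter_eq lam delta p : 0 < Re delta -> lam <> 0 ->
  forall j, (j <= p)%nat -> forall t, 0 < t < 1 / Rabs lam ->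
  Dx_x_iter j (ff lam delta p) t = ff lam delta (p - j) t.
Proof.
  intros H Hl j. induction j as [|j IH]; intros Hj t Ht.
  - simpl. rewrite Nat.sub_0_r. reflexivity.
  - change (Dx_x_iter (S j) (ff lam delta p)) with (Dx_x (Dx_x_iter j (ff lam delta p))). unfold Dx_x.
    replace (p - j)%nat with (S (p - S j)) in IH by lia.
    destruct (deriv_step lam delta (p - S j) t H Hl Ht) as [D1 D2].
    assert (Hloc : forall u, 0 < u < 1 / Rabs lam -> Dx_x_iter j (ff lam delta p) u = ff lam delta (S (p - S j)) u)
      by (intros; apply IH; auto; lia).
    rewrite (Derive_ext_loc (fun u => Re (Cmult (RtoC u) (Dx_x_iter j (ff lam delta p) u))) (fun u => Re (Cmult (RtoC u) (ff lam delta (S (p - S j)) u)))).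
    2:{ eapply filter_imp; [|apply (locally_interval t (1 / Rabs lam) Ht)].
        intros u Hu. cbv beta in *. rewrite (Hloc u Hu). reflexivity. }
    rewrite (Derive_ext_loc (fun u => Im (Cmult (RtoC u) (Dx_x_iter j (ff lam delta p) u))) (fun u => Im (Cmult (RtoC u) (ff lam delta (S (p - S j)) u)))).
    2:{ eapply filter_imp; [|apply (locally_interval t (1 / Rabs lam) Ht)].
        intros u Hu. cbv beta in *. rewrite (Hloc u Hu). reflexivity. }
    apply injective_projections; cbn [fst snd]; apply is_derive_unique; [exact D1 | exact D2].
Qed.

Lemma part1 lam delta (Hlam : lam <> 0) (Hdelta : 0 < Re delta) :
  forall (p : nat) (x : R), (1 <= p)%nat -> 0 < x -> x < 1 / Rabs lam ->
     Dx_x_iter p (fun t => Cmult (Rcpow t (Cminus delta (RtoC 1)))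
                                 (e_lam_gen lam (RtoC t) delta p)) x
     = Cmult (Rcpow x (Cminus delta (RtoC 1))) (e_lam lam (RtoC x)).
Proof.
  intros p x Hp Hx1 Hx2.
  change (fun t => Cmult (Rcpow t (Cminus delta (RtoC 1))) (e_lam_gen lam (RtoC t) delta p))
    with (ff lam delta p).
  rewrite (iter_eq lam delta p Hdelta Hlam p (Nat.le_refl p) x (conj Hx1 Hx2)).
  rewrite Nat.sub_diag. unfold ff. rewrite e_lam_gen_EE, (e_lam_EE lam delta). reflexivity.
Qed.

Lemma Re_sum_n (a : nat -> C) N : Re (sum_n a N) = sum_n (fun n => Re (a n)) N.
Proof.
  induction N. - rewrite !sum_O. reflexivity.
  - rewrite !sum_Sn, <- IHN. apply re_plus.
Qed.
Lemma Im_sum_n (a : nat -> C) N : Im (sum_n a N) = sum_n (fun n => Im (a n)) N.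
Proof.
  induction N. - rewrite !sum_O. reflexivity.
  - rewrite !sum_Sn, <- IHN. apply im_plus.
Qed.

Lemma is_series_Re (a : nat -> C) (l : C) : is_series a l -> is_series (fun n => Re (a n)) (Re l).
Proof.
  intros H. unfold is_series in *.
  apply filterlim_locally_ball_norm. intros eps.
  pose proof (proj1 (filterlim_locally_ball_norm _ _) H eps) as H1.
  eapply filter_imp; [|exact H1]. intros N HN. unfold ball_norm in *.
  rewrite <- Re_sum_n.
  eapply Rle_lt_trans; [|exact HN].
  change (norm (minus (Re (sum_n a N)) (Re l))) with (Rabs (Re (sum_n a N) - Re l)).
  change (norm (minus (sum_n a N) l)) with (Cmod (Cminus (sum_n a N) l)).
  replace (Re (sum_n a N) - Re l) with (Re (Cminus (sum_n a N) l)) by (unfold Cminus; rewrite re_plus, re_opp; ring).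
  apply re_le_Cmod.
Qed.

Lemma is_series_Im (a : nat -> C) (l : C) : is_series a l -> is_series (fun n => Im (a n)) (Im l).
Proof.
  intros H. unfold is_series in *.
  apply filterlim_locally_ball_norm. intros eps.
  pose proof (proj1 (filterlim_locally_ball_norm _ _) H eps) as H1.
  eapply filter_imp; [|exact H1]. intros N HN. unfold ball_norm in *.
  rewrite <- Im_sum_n.
  eapply Rle_lt_trans; [|exact HN].
  change (norm (minus (Im (sum_n a N)) (Im l))) with (Rabs (Im (sum_n a N) - Im l)).
  change (norm (minus (sum_n a N) l)) with (Cmod (Cminus (sum_n a N) l)).
  replace (Im (sum_n a N) - Im l) with (Im (Cminus (sum_n a N) l)) by (unfold Cminus; rewrite im_plus, im_opp; ring).
  pose proof (Rmax_Cmod (Cminus (sum_n a N) l)). pose proof (Rmax_r (Rabs (fst (Cminus (sum_n a N) l))) (Rabs (snd (Cminus (sum_n a N) l)))).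
  unfold Im. lra.
Qed.

Lemma CSeries_unique (a : nat -> C) (l : C) : is_series a l -> CSeries a = l.
Proof.
  intros H. unfold CSeries.
  rewrite (is_series_unique _ _ (is_series_Re a l H)), (is_series_unique _ _ (is_series_Im a l H)).
  destruct l; reflexivity.
Qed.

Lemma CSeries_correct_le (a : nat -> C) (b : nat -> R) :
  (forall n, Cmod (a n) <= b n) -> ex_series b -> is_series a (CSeries a).
Proof.
  intros H1 H2. destruct (@ex_series_le C_AbsRing C_CompleteNormedModule a b H1 H2) as [l Hl].
  rewrite (CSeries_unique a l Hl). exact Hl.
Qed.

Lemma norm_series_le (b : nat -> C) (l : C) (c : nat -> R) (L : R) :
  is_series b l -> (forall n, Cmod (b n) <= c n) -> is_series c L -> Cmod l <= L.
Proof.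
  intros Hb Hbc Hc.
  assert (H1 : is_lim_seq (fun N => Cmod (sum_n b N)) (Cmod l)).
  { unfold is_lim_seq. eapply filterlim_comp; [exact Hb|]. apply (filterlim_norm (K := C_AbsRing) (V := C_NormedModule) l). }
  assert (H2 : forall N, Cmod (sum_n b N) <= sum_n c N).
  { induction N. - rewrite !sum_O. apply Hbc.
    - rewrite !sum_Sn. eapply Rle_trans; [apply Cmod_triangle|]. change (plus (sum_n c N) (c (S N))) with (sum_n c N + c (S N)).
      pose proof (Hbc (S N)). lra. }
  assert (Hc2 : is_lim_seq (sum_n c) L) by exact Hc.
  pose proof (is_lim_seq_le _ _ _ _ H2 H1 Hc2). exact H.
Qed.

Lemma Cmod_u_le lam x n : Cmod (Cmult (RtoC (acoef lam n)) (Defs.Cpow x n)) <= Rabs (bb (Rabs lam) n * Cmod x ^ n).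
Proof.
  rewrite Cmod_mult, Cmod_R, Cpow_Complex, Cmod_pow, Rabs_mult.
  rewrite (Rabs_right (bb _ n)) by (left; apply bb_pos; apply Rabs_pos).
  rewrite (Rabs_right (Cmod x ^ n)) by (apply Rle_ge, pow_le, Cmod_ge_0).
  apply Rmult_le_compat_r; [apply pow_le, Cmod_ge_0 | apply acoef_le].
Qed.

Lemma ex_Ub lam x : lam <> 0 -> Cmod x < 1 / Rabs lam -> ex_series (fun n => Rabs (bb (Rabs lam) n * Cmod x ^ n)).
Proof.
  intros Hl Hx. apply CV_disk_inside. rewrite bb_radius by (apply Rabs_pos_lt; auto).
  simpl. rewrite Rabs_right by (apply Rle_ge, Cmod_ge_0). rewrite Rdiv_1_l in Hx. exact Hx.
Qed.

Lemma Cmod_delta_pos delta : 0 < Re delta -> Re delta <= Cmod delta.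
Proof. intros H. eapply Rle_trans; [|apply re_le_Cmod]. rewrite Rabs_right; lra. Qed.

Lemma Cmod_term_le lam delta x k n : 0 < Re delta ->
  Cmod (Cmult (Cdiv (RtoC (acoef lam n)) (Defs.Cpow (dd delta n) k)) (Defs.Cpow x n))
  <= Rabs (bb (Rabs lam) n * Cmod x ^ n) * (/ Cmod delta) ^ k.
Proof.
  intros H. pose proof (dd_neq0 delta n H) as Hd.
  assert (Hdk : Defs.Cpow (dd delta n) k <> RtoC 0) by (rewrite Cpow_Complex; apply Cpow_nz; auto).
  replace (Cmult (Cdiv (RtoC (acoef lam n)) (Defs.Cpow (dd delta n) k)) (Defs.Cpow x n))
    with (Cmult (Cmult (RtoC (acoef lam n)) (Defs.Cpow x n)) (Cinv (Defs.Cpow (dd delta n) k)))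
    by (field; auto).
  rewrite Cmod_mult, Cmod_inv by auto. rewrite Cpow_Complex, Cmod_pow.
  pose proof (Cmod_delta_pos delta H). pose proof (dd_Cmod_ge delta n H).
  apply Rmult_le_compat.
  - apply Cmod_ge_0.
  - left; apply Rinv_0_lt_compat, pow_lt; lra.
  - apply Cmod_u_le.
  - rewrite <- pow_inv. apply pow_incr. split.
    + left; apply Rinv_0_lt_compat; lra.
    + apply Rinv_le_contravar; lra.
Qed.

Lemma Cmod_term1_le lam delta x z n : 0 < Re delta -> Cmod z < Cmod delta ->
  Cmod (Cmult (Cdiv (RtoC (acoef lam n)) (Defs.Cpow (Cplus (RtoC (INR n)) (Cminus delta z)) 1)) (Defs.Cpow x n))
  <= Rabs (bb (Rabs lam) n * Cmod x ^ n) * / (Cmod delta - Cmod z).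
Proof.
  intros H Hz.
  assert (Heq : Cplus (RtoC (INR n)) (Cminus delta z) = Cminus (dd delta n) z) by (unfold dd; ring).
  assert (Hm : Cmod delta - Cmod z <= Cmod (Cminus (dd delta n) z)).
  { pose proof (dd_Cmod_ge delta n H). pose proof (Cmod_triangle (Cminus (dd delta n) z) z).
    replace (Cplus (Cminus (dd delta n) z) z) with (dd delta n) in H1 by ring. lra. }
  assert (Hnz : Cminus (dd delta n) z <> RtoC 0).
  { intros E. rewrite E, Cmod_0 in Hm. lra. }
  cbn [Defs.Cpow]. rewrite Heq.
  replace (Cmult (Cdiv (RtoC (acoef lam n)) (Cmult (Cminus (dd delta n) z) (RtoC 1))) (Defs.Cpow x n))
    with (Cmult (Cmult (RtoC (acoef lam n)) (Defs.Cpow x n)) (Cinv (Cminus (dd delta n) z)))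
    by (field; auto).
  rewrite Cmod_mult, Cmod_inv by auto.
  apply Rmult_le_compat.
  - apply Cmod_ge_0.
  - left; apply Rinv_0_lt_compat. pose proof (Cmod_ge_0 (Cminus (dd delta n) z)). lra.
  - apply Cmod_u_le.
  - apply Rinv_le_contravar; lra.
Qed.

Lemma geo_sum (c w : C) K : w <> RtoC 1 ->
  sum_n (fun k => Cmult c (Cpow w k)) K = Cmult c (Cdiv (Cminus (RtoC 1) (Cpow w (S K))) (Cminus (RtoC 1) w)).
Proof.
  intros Hw. assert (Hw' : Cminus (RtoC 1) w <> RtoC 0).
  { intros E. apply Hw. apply (f_equal (fun t => Cminus (RtoC 1) t)) in E.
    replace (Cminus (RtoC 1) (Cminus (RtoC 1) w)) with w in E by ring. rewrite E. ring. }
  induction K.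
  - rewrite sum_O. simpl. field. auto.
  - rewrite sum_Sn, IHK. change (plus ?a ?b) with (Cplus a b). simpl. field. auto.
Qed.

Lemma part2 lam delta (Hlam : lam <> 0) (Hdelta : 0 < Re delta) :
  forall (x z : C), Cmod x < 1 / Rabs lam -> Cmod z < Cmod delta ->
     is_series (fun k => Cmult (e_lam_gen lam x delta k) (Cpow z k))
               (Cplus (e_lam lam x) (Cmult z (e_lam_gen lam x (Cminus delta z) 1))).
Proof.
  intros x z Hx Hz.
  pose proof (Cmod_delta_pos delta Hdelta) as Hm.
  set (q := Cmod z / Cmod delta).
  assert (Hq0 : 0 <= q) by (unfold q; apply Rmult_le_pos; [apply Cmod_ge_0 | left; apply Rinv_0_lt_compat; lra]).
  assert (Hq1 : q < 1) by (unfold q; apply (Rmult_lt_reg_r (Cmod delta)); [lra|]; field_simplify; lra).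
  set (Ub := fun n => Rabs (bb (Rabs lam) n * Cmod x ^ n)).
  assert (HU : ex_series Ub) by (apply ex_Ub; auto).
  set (U := Series Ub). assert (HU' : is_series Ub U) by (apply Series_correct; auto).
  set (u := fun n => Cmult (RtoC (acoef lam n)) (Defs.Cpow x n)).
  set (term := fun k n => Cmult (Cdiv (RtoC (acoef lam n)) (Defs.Cpow (dd delta n) k)) (Defs.Cpow x n)).
  set (term1 := fun n => Cmult (Cdiv (RtoC (acoef lam n)) (Defs.Cpow (Cplus (RtoC (INR n)) (Cminus delta z)) 1)) (Defs.Cpow x n)).
  set (w := fun n => Cdiv z (dd delta n)).
  assert (Hw : forall n, Cmod (w n) <= q).
  { intros n. unfold w, q. rewrite Cmod_div by (apply dd_neq0; auto).
    pose proof (dd_Cmod_ge delta n Hdelta). pose proof (Cmod_ge_0 z).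
    unfold Rdiv. apply Rmult_le_compat_l; auto. apply Rinv_le_contravar; lra. }
  assert (Hw1 : forall n, 1 - q <= Cmod (Cminus (RtoC 1) (w n))).
  { intros n. pose proof (Cmod_triangle (Cminus (RtoC 1) (w n)) (w n)).
    replace (Cplus (Cminus (RtoC 1) (w n)) (w n)) with (RtoC 1) in H by ring.
    rewrite Cmod_1 in H. pose proof (Hw n). lra. }
  assert (Hw1' : forall n, Cminus (RtoC 1) (w n) <> RtoC 0).
  { intros n E. pose proof (Hw1 n). rewrite E, Cmod_0 in H. lra. }
  assert (Hw1'' : forall n, w n <> RtoC 1).
  { intros n E. apply (Hw1' n). rewrite E. ring. }
  assert (E0 : is_series u (e_lam lam x)).
  { change (e_lam lam x) with (CSeries u). apply (CSeries_correct_le u Ub); auto.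
    intros n; apply Cmod_u_le. }
  assert (E1 : is_series term1 (e_lam_gen lam x (Cminus delta z) 1)).
  { change (e_lam_gen lam x (Cminus delta z) 1) with (CSeries term1).
    apply (CSeries_correct_le term1 (fun n => Ub n * / (Cmod delta - Cmod z))).
    - intros n; apply Cmod_term1_le; auto.
    - apply ex_series_scal_r; auto. }
  assert (Ek : forall k, is_series (term k) (e_lam_gen lam x delta k)).
  { intros k. change (e_lam_gen lam x delta k) with (CSeries (term k)).
    apply (CSeries_correct_le (term k) (fun n => Ub n * (/ Cmod delta) ^ k)).
    - intros n; apply Cmod_term_le; auto.
    - apply ex_series_scal_r; auto. }
  set (T := Cplus (e_lam lam x) (Cmult z (e_lam_gen lam x (Cminus delta z) 1))).
  assert (HT : is_series (fun n => Cplus (u n) (Cmult z (term1 n))) T).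
  { apply (is_series_plus u (fun n => Cmult z (term1 n))); auto.
    apply (is_series_scal z term1); auto. }
  assert (Hd : forall n, dd delta n <> RtoC 0) by (intros; apply dd_neq0; auto).
  assert (Hd' : forall n, Cminus (dd delta n) z <> RtoC 0).
  { intros n E. apply (Hw1' n).
    assert (Cminus (RtoC 1) (w n) = Cdiv (Cminus (dd delta n) z) (dd delta n)) by (unfold w; field; auto).
    rewrite H, E. field. auto. }
  assert (alg1 : forall n, Cplus (u n) (Cmult z (term1 n)) = Cdiv (u n) (Cminus (RtoC 1) (w n))).
  { intros n. pose proof (Hd n). pose proof (Hd' n). unfold u, term1, w. unfold dd in *. cbn [Defs.Cpow]. field; auto. }
  assert (alg2 : forall k n, Cmult (term k n) (Cpow z k) = Cmult (u n) (Cpow (w n) k)).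
  { intros k n. pose proof (Hd n). unfold term, u, w. rewrite !Cpow_Complex.
    assert (Complex.Cpow (dd delta n) k <> RtoC 0) by (apply Cpow_nz; auto).
    replace (Complex.Cpow (Cdiv z (dd delta n)) k) with (Cmult (Complex.Cpow z k) (Cinv (Complex.Cpow (dd delta n) k)))
      by (unfold Cdiv; rewrite Cpow_mult_l, Cpow_inv; auto).
    field; auto. }
  set (PS := fun K => sum_n (fun k => Cmult (e_lam_gen lam x delta k) (Cpow z k)) K).
  assert (Ekz : forall k, is_series (fun n => Cmult (term k n) (Cpow z k)) (Cmult (e_lam_gen lam x delta k) (Cpow z k))).
  { intros k. pose proof (is_series_scal (Cpow z k) _ _ (Ek k)) as H.
    rewrite (Cmult_comm (e_lam_gen lam x delta k)).
    eapply is_series_ext; [|exact H]. intros n. apply Cmult_comm. }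
  assert (PSK : forall K, is_series (fun n => sum_n (fun k => Cmult (term k n) (Cpow z k)) K) (PS K)).
  { induction K.
    - unfold PS. rewrite sum_O. eapply is_series_ext; [|exact (Ekz 0%nat)]. intros n. rewrite sum_O. reflexivity.
    - unfold PS in *. rewrite sum_Sn. eapply is_series_ext; [|exact (is_series_plus _ _ _ _ IHK (Ekz (S K)))].
      intros n. rewrite sum_Sn. reflexivity. }
  assert (Diff : forall K, is_series (fun n => Cmult (u n) (Cdiv (Cpow (w n) (S K)) (Cminus (RtoC 1) (w n)))) (Cminus T (PS K))).
  { intros K. pose proof (is_series_minus _ _ _ _ HT (PSK K)) as H.
    eapply is_series_ext; [|exact H]. intros n. cbv beta.
    rewrite alg1, (sum_n_ext _ (fun k => Cmult (u n) (Cpow (w n) k))) by (intros; apply alg2).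
    rewrite geo_sum by auto. change (plus ?a ?b) with (Cplus a b). change (opp ?a) with (Copp a).
    pose proof (Hw1' n). generalize dependent (Cpow (w n) (S K)). generalize dependent (w n). generalize (u n). intros. match goal with |- ?a = ?b => change (@eq C a b) end. field. auto. }
  assert (Bound : forall K, Cmod (Cminus T (PS K)) <= U * (q ^ (S K) / (1 - q))).
  { intros K. apply (norm_series_le _ _ (fun n => Ub n * (q ^ (S K) / (1 - q))) _ (Diff K)).
    - intros n. rewrite Cmod_mult, Cmod_div by auto. rewrite Cmod_pow.
      apply Rmult_le_compat.
      + apply Cmod_ge_0.
      + unfold Rdiv. apply Rmult_le_pos; [apply pow_le, Cmod_ge_0|].
        left; apply Rinv_0_lt_compat. apply Cmod_gt_0; auto.
      + apply Cmod_u_le.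
      + unfold Rdiv. apply Rmult_le_compat.
        * apply pow_le, Cmod_ge_0.
        * left; apply Rinv_0_lt_compat. apply Cmod_gt_0; auto.
        * apply pow_incr. split; [apply Cmod_ge_0 | auto].
        * apply Rinv_le_contravar; [lra | auto].
    - apply is_series_scal_r. exact HU'. }
  unfold is_series. apply filterlim_locally_ball_norm. intros eps.
  assert (lim : is_lim_seq (fun K => U * (q ^ (S K) / (1 - q))) 0).
  { apply is_lim_seq_ext with (fun K => (U * q / (1 - q)) * q ^ K).
    - intros K. simpl. field. lra.
    - replace (Finite 0) with (Rbar_mult (U * q / (1 - q)) 0) by (simpl; f_equal; ring).
      apply is_lim_seq_scal_l, is_lim_seq_geom. rewrite Rabs_right; lra. }
  apply is_lim_seq_spec in lim. specialize (lim eps).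
  eapply filter_imp; [|exact lim]. intros K HK. cbv beta in HK. rewrite Rminus_0_r in HK.
  unfold ball_norm.
  change (norm (minus (sum_n (fun k => Cmult (e_lam_gen lam x delta k) (Cpow z k)) K) T))
    with (Cmod (Cminus (PS K) T)).
  replace (Cminus (PS K) T) with (Copp (Cminus T (PS K))) by ring. rewrite Cmod_opp.
  eapply Rle_lt_trans; [apply Bound|]. eapply Rle_lt_trans; [apply Rle_abs|exact HK].
Qed.

Theorem theorem3 (lam : R) (delta : C) (Hlam : lam <> 0) (Hdelta : 0 < Re delta) :
  (forall (p : nat) (x : R), (1 <= p)%nat -> 0 < x -> x < 1 / Rabs lam ->
     Dx_x_iter p (fun t => Cmult (Rcpow t (Cminus delta (RtoC 1)))
                                 (e_lam_gen lam (RtoC t) delta p)) x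
     = Cmult (Rcpow x (Cminus delta (RtoC 1))) (e_lam lam (RtoC x)))
  /\
  (forall (x z : C), Cmod x < 1 / Rabs lam -> Cmod z < Cmod delta ->
     is_series (fun k => Cmult (e_lam_gen lam x delta k) (Cpow z k))
               (Cplus (e_lam lam x) (Cmult z (e_lam_gen lam x (Cminus delta z) 1)))).
Proof.
  split; [apply part1 | apply part2]; auto.
Qed.
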